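(* Let $A$ be a general metric space, $\mathcal F_1$ a Cauchy filter and $\mathcal F_2$ a weakly flat filter on $A$. Then $$\sup_{x\in A}[M^-(\mathcal F_1)(x),M^-(\mathcal F_2)(x)]=\lim^-_{y\in\mathcal F_2}\lim^+_{x\in\mathcal F_1}A(x,y).$$
   Context: $[0,\infty]$ with $+$, $[x,y]=\max(y-x,0)$ for finite $x,y$, $[x,\infty]=\infty$ for $x<\infty$, $[\infty,y]=0$; $\inf\emptyset=\infty$, $\sup\emptyset=0$. A general metric space $A$ is a set with $A(-,-):A\times A\to[0,\infty]$, $A(x,x)=0$, $A(x,z)\le A(x,y)+A(y,z)$ (no symmetry). A filter on $A$ is a nonempty set of nonempty subsets closed under finite intersections and supersets; $\lim^+_{\mathcal F}t=\inf_{f\in\mathcal F}\sup_{x\in f}t(x)$, $\lim^-_{\mathcal F}t=\sup_{f\in\mathcal F}\inf_{x\in f}t(x)$; $M^-(\mathcal F)(x)=\lim^-_{y\in\mathcal F}A(x,y)$. $\mathcal F$ is Cauchy iff $\inf_{f\in\mathcal F}\sup_{x,y\in f}A(x,y)=0$; weakly flat iff $\lim^+_{\mathcal F}M^-(\mathcal F)=0$. *)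

(* Defs.v *)
(* [0,oo] is modelled inside the extended reals \bar R. *)
From HB Require Import structures.
From mathcomp Require Import all_boot all_order all_algebra.
From mathcomp Require Import all_classical all_reals ereal.
Set Implicit Arguments. Unset Strict Implicit. Unset Printing Implicit Defensive.
Import Order.TTheory GRing.Theory Num.Theory.
Local Open Scope classical_set_scope.
Local Open Scope ereal_scope.

Section Defs.
Context {R : realType}.

(* truncated difference [x,y] on [0,oo] *)
Definition tminus (x y : \bar R) : \bar R :=
  match x, y with
  | EFin a, EFin b => EFin (Num.max (b - a) 0)%R
  | EFin _, +oo => +oo
  | +oo, _ => 0
  | _, _ => 0 (* -oo never occurs: values lie in [0,oo] *)
  end.

(* inf with inf(empty) = oo, sup with sup(empty) = 0 (values are >= 0) *)
Definition einf (S : set (\bar R)) : \bar R := ereal_inf S.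
Definition esup (S : set (\bar R)) : \bar R := ereal_sup ([set 0] `|` S).

Context {T : Type}.

Definition gen_metric (d : T -> T -> \bar R) : Prop :=
  [/\ forall x y, 0 <= d x y,
      forall x, d x x = 0 &
      forall x y z, d x z <= d x y + d y z].

Definition is_filter (F : set (set T)) : Prop :=
  [/\ exists f, F f,
      forall f, F f -> exists x, f x,
      forall f g, F f -> F g -> F (f `&` g) &
      forall f g, F f -> f `<=` g -> F g].

Definition limsupF (F : set (set T)) (t : T -> \bar R) : \bar R :=
  einf [set esup (t @` f) | f in F].
Definition liminfF (F : set (set T)) (t : T -> \bar R) : \bar R :=
  esup [set einf (t @` f) | f in F].

Definition Mminus (d : T -> T -> \bar R) (F : set (set T)) (x : T) : \bar R :=
  liminfF F (fun y => d x y).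

Definition cauchyF (d : T -> T -> \bar R) (F : set (set T)) : Prop :=
  einf [set esup [set d p.1 p.2 | p in f `*` f] | f in F] = 0.

Definition weakly_flat (d : T -> T -> \bar R) (F : set (set T)) : Prop :=
  limsupF F (Mminus d F) = 0.

End Defs.

(* Main.v *)
Require Import Defs.
From mathcomp Require Import all_boot all_order all_algebra.
From mathcomp Require Import all_classical all_reals ereal.
From mathcomp Require Import lra.
Import Order.TTheory GRing.Theory Num.Theory.
Local Open Scope classical_set_scope.
Local Open Scope ereal_scope.

Section Helpers.
Context {R : realType}.
Implicit Types (S : set (\bar R)).

Lemma esup_ge S s : S s -> s <= esup S.
Proof. by move=> Ss; apply: ereal_sup_ubound; right. Qed.

Lemma esup_ge0 S : 0 <= esup S.
Proof. by apply: ereal_sup_ubound; left. Qed.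

Lemma esup_le S M : 0 <= M -> (forall s, S s -> s <= M) -> esup S <= M.
Proof. by move=> M0 H; apply: ge_ereal_sup => s [->|/H]. Qed.

Lemma einf_le S s : S s -> einf S <= s.
Proof. by move=> Ss; apply: ereal_inf_lbound. Qed.

Lemma einf_lt S c : einf S < c -> exists2 y, S y & y < c.
Proof. by move/ereal_inf_ltP. Qed.

Lemma le3 (x y : \bar R) :
  (forall e : R, (0 < e)%R -> x <= y + (3 * e)%:E) -> x <= y.
Proof.
move=> H; apply/lee_addgt0Pr => e e0.
have := H (e / 3)%R; rewrite divr_gt0// => /(_ isT).
by rewrite mulrC divfK.
Qed.

End Helpers.

Theorem mainTheorem16 (R : realType) (T : Type) (d : T -> T -> \bar R)
  (F1 F2 : set (set T)) :
  gen_metric d -> is_filter F1 -> is_filter F2 ->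
  cauchyF d F1 -> weakly_flat d F2 ->
  esup [set tminus (Mminus d F1 x) (Mminus d F2 x) | x in [set: T]] =
  liminfF F2 (fun y => limsupF F1 (fun x => d x y)).
Proof.
move=> [d0 dxx dtri] [_ F1ne F1I _] [_ F2ne F2I _] cau _.
set L := fun y => limsupF F1 (fun x => d x y).
set RHS := liminfF F2 L.
set LHS := esup _.
have RHS0 : 0 <= RHS by apply: esup_ge0.
have LHS0 : 0 <= LHS by apply: esup_ge0.
have M0 : forall F x, 0 <= Mminus d F x by move=> F x; apply: esup_ge0.
have claim1 : forall x, Mminus d F2 x <= Mminus d F1 x + RHS.
  move=> x; apply: esup_le; first by rewrite adde_ge0.
  move=> _ [g Fg <-].
  have := M0 F1 x; have := RHS0.
  case E1: (Mminus d F1 x) => [m||] //; case ER: (RHS) => [r||] // _ _;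
    try by rewrite leey.
  apply: le3 => e e0.
  have : einf (L @` g) < (r + e)%:E.
    apply: (le_lt_trans (y := RHS)); first by apply: esup_ge; exists g.
    by rewrite ER lte_fin; lra.
  move=> /einf_lt [_ [y gy <-]].
  rewrite /L /limsupF => /einf_lt [_ [f Ff <-]] Hf.
  have : einf ((fun z => d x z) @` f) < (m + e)%:E.
    apply: (le_lt_trans (y := Mminus d F1 x)); first by apply: esup_ge; exists f.
    by rewrite E1 lte_fin; lra.
  move=> /einf_lt [_ [z fz <-]] Hz.
  have Hzy : d z y < (r + e)%:E.
    by apply: le_lt_trans Hf; apply: esup_ge; exists z.
  apply: (le_trans (y := d x y)); first by apply: einf_le; exists y.
  apply: (le_trans (dtri x z y)).
  apply: (le_trans (y := ((m + e) + (r + e))%:E)).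
    by rewrite EFinD; apply: ltW; apply: lteD.
  by rewrite -!EFinD lee_fin; lra.
apply: le_anti; apply/andP; split.
  apply: esup_le => // _ [x _ <-].
  have := claim1 x; have := M0 F1 x; have := M0 F2 x; have := RHS0.
  case: (Mminus d F1 x) => [m||] //; case: (Mminus d F2 x) => [m2||] //;
    case: (RHS) => [r||] // r0 _ m0 //=; rewrite ?leey //.
  rewrite !lee_fin => H; rewrite ge_max; apply/andP; split => //; lra.
apply: esup_le => // _ [g Fg <-].
have := LHS0; case ES: (LHS) => [s||] // s0; first last.
  by rewrite leey.
apply: le3 => e e0.
have : einf [set esup [set d p.1 p.2 | p in f `*` f] | f in F1] < e%:E.
  by rewrite cau lte_fin.
move=> /einf_lt [_ [f Ff <-]] Hf.
have dlt : forall p q, f p -> f q -> d p q < e%:E.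
  by move=> p q fp fq; apply: le_lt_trans Hf; apply: esup_ge; exists (p, q).
have [x fx] := F1ne f Ff.
have M1e : Mminus d F1 x <= e%:E.
  apply: esup_le; first by rewrite lee_fin ltW.
  move=> _ [f' Ff' <-].
  have [z [fz f'z]] := F1ne _ (F1I _ _ Ff Ff').
  by apply: (le_trans (y := d x z)); [apply: einf_le; exists z | apply: ltW; apply: dlt].
have Ht : tminus (Mminus d F1 x) (Mminus d F2 x) <= s%:E.
  by rewrite -ES; apply: esup_ge; exists x.
have : Mminus d F2 x < (s + e + e)%:E.
  move: Ht M1e; have := M0 F1 x; have := M0 F2 x.
  case: (Mminus d F1 x) => [m||] //; case: (Mminus d F2 x) => [m2||] //= m20 m0.
  rewrite !lee_fin ge_max lte_fin => /andP [H _] me; lra.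
move=> H2.
have : einf ((fun y => d x y) @` g) < (s + e + e)%:E.
  by apply: le_lt_trans H2; apply: esup_ge; exists g.
move=> /einf_lt [_ [y gy <-]] Hxy.
apply: (le_trans (y := L y)); first by apply: einf_le; exists y.
apply: (le_trans (y := esup ((fun z => d z y) @` f))); first by apply: einf_le; exists f.
apply: esup_le; first by apply: adde_ge0 => //; rewrite lee_fin; lra.
move=> _ [z fz <-].
apply: (le_trans (dtri z x y)).
apply: (le_trans (y := (e + (s + e + e))%:E)).
  by rewrite EFinD; apply: ltW; apply: lteD => //; apply: dlt.
by rewrite -!EFinD lee_fin; lra.
Qed.
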